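(* For every odd integer $n \ge 3$, the sets $S_{0,0}(n)$ and $S_{1,1}(n)$ have the same cardinality.
   Context: For $n \ge 2$, let $\mathcal{I}_n$ be the set of all irreducible polynomials of degree $n$ in $\mathbb{F}_2[x]$. Every $f \in \mathcal{I}_n$ is monic with constant term $1$; write $f = x^n + f_{n-1}x^{n-1} + \cdots + f_1 x + 1$ with $f_k \in \mathbb{F}_2$. The coefficient $f_{n-1}$ is the trace of $f$ and $f_1$ is its cotrace. For $i,j \in \mathbb{F}_2$, $S_{i,j}(n)$ denotes the set of $f \in \mathcal{I}_n$ with $f_{n-1} = i$ and $f_1 = j$. *)

(* Defs.v *)
From mathcomp Require Import all_boot all_algebra.
From mathcomp Require Import boolp.
Set Implicit Arguments. Unset Strict Implicit. Unset Printing Implicit Defensive.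
Import GRing.Theory.
Local Open Scope ring_scope.

(* The monic polynomial of degree n over F_2 with lower coefficients c:
   x^n + c_{n-1} x^{n-1} + ... + c_0.  Every monic degree-n polynomial
   arises from exactly one c. *)
Definition monic_of (n : nat) (c : {ffun 'I_n -> 'F_2}) : {poly 'F_2} :=
  'X^n + \sum_(k < n) (c k)%:P * 'X^k.

(* S_{i,j}(n): irreducible degree-n polynomials f with f_{n-1} = i
   (trace) and f_1 = j (cotrace), encoded by their coefficient vector.  irreducible_poly is a Prop,
   reflected into bool with boolp's `[< _ >]. *)
Definition S (n : nat) (i j : 'F_2) : {set {ffun 'I_n -> 'F_2}} :=
  [set c | `[< irreducible_poly (monic_of c) >]
           && ((monic_of c)`_n.-1 == i) && ((monic_of c)`_1 == j)].

(* Main.v *)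
Require Import Defs.
From mathcomp Require Import all_boot all_algebra.
From mathcomp Require Import all_boot all_algebra.
From mathcomp Require Import zify boolp.
Set Implicit Arguments. Unset Strict Implicit. Unset Printing Implicit Defensive.
Import GRing.Theory.
Local Open Scope ring_scope.

Section Rev.
Variable R : fieldType.
Implicit Types p q : {poly R}.

Definition rv (d : nat) (p : {poly R}) : {poly R} :=
  \sum_(i < d.+1) p`_i *: 'X^(d - i).

Lemma rv0 d : rv d 0 = 0.
Proof. by rewrite /rv big1 // => i _; rewrite coef0 scale0r. Qed.

Lemma rvD d p q : rv d (p + q) = rv d p + rv d q.
Proof. by rewrite /rv -big_split; apply: eq_bigr => i _; rewrite coefD scalerDl. Qed.

Lemma rvZ d c p : rv d (c *: p) = c *: rv d p.
Proof. by rewrite /rv scaler_sumr; apply: eq_bigr => i _; rewrite coefZ scalerA. Qed.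

Lemma rv_sum d (I : finType) (F : I -> {poly R}) :
  rv d (\sum_(i : I) F i) = \sum_(i : I) rv d (F i).
Proof. exact: (big_morph _ (rvD d) (rv0 d)). Qed.

Lemma rvXn d k : (k <= d)%N -> rv d 'X^k = 'X^(d - k).
Proof.
move=> kd; have kd1 : (k < d.+1)%N by [].
rewrite /rv (bigD1 (Ordinal kd1)) //= big1 ?addr0 ?coefXn ?eqxx ?scale1r //.
move=> i /eqP neq; rewrite coefXn; case: eqP => [e|]; last by rewrite scale0r.
by case: neq; apply: val_inj.
Qed.

Lemma poly_expand d p : (size p <= d.+1)%N -> p = \sum_(i < d.+1) p`_i *: 'X^i.
Proof.
move=> sp; rewrite -poly_def; apply/polyP => k; rewrite coef_poly.
case: ifP => // /negbT; rewrite -leqNgt => h; apply: nth_default.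
exact: leq_trans sp h.
Qed.

Lemma rvM da db (a b : {poly R}) : (size a <= da.+1)%N -> (size b <= db.+1)%N ->
  rv (da + db) (a * b) = rv da a * rv db b.
Proof.
move=> sa sb; rewrite {1}(poly_expand sa) {1}(poly_expand sb) big_distrl /= rv_sum.
rewrite [rv da a]/rv [rv db b]/rv big_distrl /=; apply: eq_bigr => i _.
rewrite big_distrr /= rv_sum big_distrr /=; apply: eq_bigr => j _.
rewrite -scalerAl -scalerAr scalerA -exprD rvZ rvXn; last first.
  have := ltn_ord i; have := ltn_ord j; lia.
rewrite -scalerAl -scalerAr scalerA -exprD; congr (_ *: 'X^_).
have := ltn_ord i; have := ltn_ord j; lia.
Qed.

Lemma coef_rv d p k : (rv d p)`_k = if (k <= d)%N then p`_(d - k) else 0.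
Proof.
rewrite /rv coef_sum.
under eq_bigr do rewrite coefZ coefXn.
case: ifP => kd.
  have h : (d - k < d.+1)%N by lia.
  rewrite (bigD1 (Ordinal h)) //= big1 ?addr0.
    by rewrite (_ : d - (d - k) = k)%N ?eqxx ?mulr1 //; lia.
  move=> i /eqP neq; case: eqP => [e|]; last by rewrite mulr0.
  by case: neq; apply: val_inj => /=; have := ltn_ord i; lia.
rewrite big1 // => i _; case: eqP => [e|]; last by rewrite mulr0.
by have := ltn_ord i; lia.
Qed.


Lemma gtn_sizeC p i : p`_i != 0 -> (i < size p)%N.
Proof. move=> h; rewrite ltnNge; apply/negP => /leq_sizeP/(_ i (leqnn i)) e; by rewrite e eqxx in h. Qed.

Lemma size_rv_le d p : (size (rv d p) <= d.+1)%N.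
Proof. apply/leq_sizeP => j hj; rewrite coef_rv; case: ifP => //; lia. Qed.

Lemma rvK d p : (size p <= d.+1)%N -> rv d (rv d p) = p.
Proof.
move=> sp; apply/polyP => k; rewrite !coef_rv.
case: ifP => kd; first by rewrite ifT ?subKn //; lia.
by apply/esym/nth_default; move/negbT: kd; rewrite -ltnNge; apply: leq_trans.
Qed.

Lemma size_rv d p : (size p <= d.+1)%N -> p`_0 != 0 -> size (rv d p) = d.+1.
Proof.
move=> sp p0; apply/anti_leq; rewrite size_rv_le /=.
by apply: gtn_sizeC; rewrite coef_rv leqnn subnn.
Qed.

Lemma irr_rv n p : size p = n.+1 -> p`_0 != 0 -> irreducible_poly p ->
  irreducible_poly (rv n p).
Proof.
move=> sp p0 irr; split; first by rewrite size_rv ?sp //; case: irr; rewrite sp.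
move=> q sq /dvdpP [r Er].
have rp0 : rv n p != 0 by rewrite -size_poly_gt0 size_rv ?sp.
have r0 : r != 0 by apply: contraNneq rp0 => e; rewrite Er e mul0r.
have q0 : q != 0 by apply: contraNneq rp0 => e; rewrite Er e mulr0.
have szrq : (size r + size q).-1 = n.+1 by rewrite -size_mul // -Er size_rv ?sp.
have c0 : r`_0 * q`_0 != 0.
  rewrite -coef0M -Er coef_rv leq0n subn0.
  have -> : p`_n = lead_coef p by rewrite lead_coefE sp.
  by rewrite lead_coef_eq0 -size_poly_gt0 sp.
have q00 : q`_0 != 0 by apply: contraNneq c0 => ->; rewrite mulr0.
have [dr sr] : exists dr, size r = dr.+1.
  by exists (size r).-1; rewrite prednK // size_poly_gt0.
have [dq sq'] : exists dq, size q = dq.+1.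
  by exists (size q).-1; rewrite prednK // size_poly_gt0.
have dd : (dr + dq = n)%N.
  move: szrq; rewrite sr sq' /=; lia.
have Ep : p = rv dr r * rv dq q.
  by rewrite -rvM ?sr ?sq' // dd -Er rvK ?sp.
have dv : rv dq q %| p by rewrite Ep dvdp_mull.
have szq : size (rv dq q) = size q by rewrite size_rv ?sq' ?leqnn.
idtac.
have := irr _ _ dv; rewrite szq => /(_ sq) /eqp_size; rewrite szq sp => e.
by rewrite -dvdp_size_eqp ?Er ?dvdp_mull // -Er size_rv ?sp ?e.
Qed.

End Rev.

Lemma F2_11 : (1 + 1 : 'F_2) = 0. Proof. exact: val_inj. Qed.
Lemma F2_cases (x:'F_2) : x = 0 \/ x = 1.
Proof. case: x => [[|[|m]] Hm]; [left|right|by []]; exact: val_inj. Qed.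
Lemma F2_neq0 (x : 'F_2) : x != 0 -> x = 1.
Proof. by case: (F2_cases x) => ->. Qed.
Lemma F2_nat m : (m%:R : 'F_2) = (odd m)%:R.
Proof. elim: m => // m IH; rewrite mulrS IH /=; case: (odd m) => //=. exact: F2_11. by rewrite addr0. Qed.
Lemma F2_opp (x : 'F_2) : - x = x.
Proof. by case: (F2_cases x) => ->; [rewrite oppr0 | exact: val_inj]. Qed.

Definition T (p : {poly 'F_2}) := p \Po ('X + 1).

Lemma size_T p : size (T p) = size p.
Proof. by rewrite /T size_comp_poly2 // -polyC1 size_XaddC. Qed.

Lemma TT p : T (T p) = p.
Proof.
rewrite /T -comp_polyA comp_polyD comp_polyX comp_polyC -addrA -polyCD F2_11.
by rewrite addr0 comp_polyXr.
Qed.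

Lemma coef_XaddC1_exp i k : ((('X + 1) ^+ i : {poly 'F_2}))`_k = 'C(i,k)%:R.
Proof.
elim: i k => [|i IH] k; first by rewrite expr0 coefC; case: k.
rewrite exprSr mulrDr mulr1 coefD coefMX; case: k => [|k] /=; rewrite !IH.
  by rewrite add0r !bin0.
by rewrite binS natrD addrC.
Qed.

Lemma coef_T p k : (T p)`_k = \sum_(i < size p) p`_i * 'C(i,k)%:R.
Proof. by rewrite /T coef_comp_poly; apply: eq_bigr => i _; rewrite coef_XaddC1_exp. Qed.

Lemma irr_T p : irreducible_poly p -> irreducible_poly (T p).
Proof.
move=> irr; split; first by rewrite size_T; case: irr.
move=> q sq dq; have : T q %| p by rewrite -[p]TT dvdp_comp_poly.
move/(irr _); rewrite size_T => /(_ sq) /andP [h1 h2].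
by apply/andP; split; rewrite -[q]TT dvdp_comp_poly.
Qed.

Lemma irr_noroot (p : {poly 'F_2}) x : irreducible_poly p -> (2 < size p)%N -> ~~ root p x.
Proof.
move=> irr sp; apply/negP => r; have d : ('X - x%:P) %| p by rewrite dvdp_XsubCl.
have := irr _ _ d; rewrite size_XsubC => /(_ isT) /eqp_size; rewrite size_XsubC.
by move=> e; rewrite -e in sp.
Qed.

Section MonicOf.
Variable n : nat.
Implicit Types c : {ffun 'I_n -> 'F_2}.

Lemma coef_monic_of c k :
  (monic_of c)`_k = (k == n)%:R + \sum_(j < n) c j * (k == j)%:R.
Proof.
rewrite /monic_of coefD coefXn coef_sum; congr (_ + _).
by apply: eq_bigr => j _; rewrite coefCM coefXn.
Qed.

Lemma coef_monic_of_ord c (k : 'I_n) : (monic_of c)`_k = c k.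
Proof.
rewrite coef_monic_of (bigD1 k) //= eqxx mulr1 big1 ?addr0.
  by rewrite (_ : (k == n :> nat) = false) ?add0r //; apply/negbTE; rewrite neq_ltn ltn_ord.
by move=> j ne; rewrite (_ : (k == j :> nat) = false) ?mulr0 //; apply/negbTE; rewrite eq_sym; exact: ne.
Qed.

Lemma coef_monic_of_ge c k : (n <= k)%N -> (monic_of c)`_k = (k == n)%:R.
Proof.
move=> nk; rewrite coef_monic_of big1 ?addr0 // => j _.
rewrite (_ : (k == j :> nat) = false) ?mulr0 //; apply/negbTE.
by rewrite neq_ltn; apply/orP; right; exact: leq_trans (ltn_ord j) nk.
Qed.

Lemma size_monic_of c : size (monic_of c) = n.+1.
Proof.
apply/anti_leq/andP; split.
  apply/leq_sizeP => j hj; rewrite coef_monic_of_ge 1?ltnW //.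
  by rewrite (_ : (j == n) = false) //; apply/negbTE; rewrite neq_ltn hj orbT.
by apply: gtn_sizeC; rewrite coef_monic_of_ge // eqxx oner_neq0.
Qed.

Lemma monic_ofK (p : {poly 'F_2}) : size p = n.+1 ->
  monic_of [ffun k : 'I_n => p`_k] = p.
Proof.
move=> sp; apply/polyP => k; case: (ltnP k n) => kn.
  by rewrite (coef_monic_of_ord _ (Ordinal kn)) ffunE.
rewrite coef_monic_of_ge //; case: eqP => [->|ne].
  apply/esym/F2_neq0; have -> : p`_n = lead_coef p by rewrite lead_coefE sp.
  by rewrite lead_coef_eq0 -size_poly_gt0 sp.
by apply/esym/nth_default; rewrite sp; lia.
Qed.

Lemma monic_of_inj : injective (@monic_of n).
Proof.
move=> c1 c2 e; apply/ffunP => k; by rewrite -!coef_monic_of_ord e.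
Qed.

Lemma transfer_le (P Q : {poly 'F_2} -> bool) (g h : {poly 'F_2} -> {poly 'F_2}) :
  (forall p : {poly 'F_2}, size p = n.+1 -> P p -> [/\ size (g p) = n.+1, Q (g p) & h (g p) = p]) ->
  (#|[set c : {ffun 'I_n -> 'F_2} | P (monic_of c)]| <= #|[set c : {ffun 'I_n -> 'F_2} | Q (monic_of c)]|)%N.
Proof.
move=> H.
pose G := fun c : {ffun 'I_n -> 'F_2} => [ffun k : 'I_n => (g (monic_of c))`_k].
have GE : forall c, P (monic_of c) -> monic_of (G c) = g (monic_of c).
  by move=> c Pc; have [s _ _] := H _ (size_monic_of c) Pc; rewrite monic_ofK.
rewrite -(@card_in_imset _ _ G); last first.
  move=> c1 c2; rewrite !inE => P1 P2 e.
  have [_ _ h1] := H _ (size_monic_of c1) P1.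
  have [_ _ h2] := H _ (size_monic_of c2) P2.
  by apply: monic_of_inj; rewrite -h1 -h2 -GE // -GE // e.
apply: subset_leq_card; apply/subsetP => x /imsetP [c]; rewrite !inE => Pc ->.
by rewrite GE //; have [_ Q1 _] := H _ (size_monic_of c) Pc.
Qed.

End MonicOf.

Section Main.
Variable n : nat.
Hypothesis on : odd n.
Hypothesis n3 : (3 <= n)%N.

Definition good (p : {poly 'F_2}) := size p = n.+1 /\ irreducible_poly p.
Local Notation u p := ((T p)`_1).

Lemma n1 : (n%:R : 'F_2) = 1.
Proof. by rewrite F2_nat on. Qed.

Lemma good_lead p : good p -> p`_n = 1.
Proof.
case=> sp _; apply/F2_neq0; have -> : p`_n = lead_coef p by rewrite lead_coefE sp.
by rewrite lead_coef_eq0 -size_poly_gt0 sp.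
Qed.

Lemma good_p0 p : good p -> p`_0 = 1.
Proof.
case=> sp irr; apply/F2_neq0; rewrite -horner_coef0.
by have := irr_noroot 0 irr; rewrite sp ltnS => /(_ (ltnW n3)); apply.
Qed.

Lemma good_sum p : good p -> \sum_(i < n.+1) p`_i = 1.
Proof.
move=> [sp irr]; have := irr_noroot 1 irr; rewrite sp ltnS => /(_ (ltnW n3)).
rewrite /root horner_coef => /F2_neq0 <-.
have e : size p = n.+1 := sp.
by rewrite e; apply: eq_bigr => i _; rewrite expr1n mulr1.
Qed.

Lemma good_T p : good p -> good (T p).
Proof. by case=> sp irr; split; [rewrite size_T | exact: irr_T]. Qed.

Lemma good_rv p : good p -> good (rv n p).
Proof.
move=> gp; have [sp irr] := gp; have p0 : p`_0 != 0 by rewrite good_p0 // oner_neq0.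
by split; [rewrite size_rv ?sp | exact: irr_rv].
Qed.

Lemma rvrv p : good p -> rv n (rv n p) = p.
Proof. by case=> sp _; rewrite rvK ?sp. Qed.

Lemma tr_T p : good p -> (T p)`_n.-1 = p`_n.-1 + 1.
Proof.
move=> gp; have [sp _] := gp; have lp := good_lead gp.
rewrite coef_T.
have [k nk] : exists k, n = k.+2 by exists n.-2; move: n3; clear; case: n => [|[|m]].
move: lp; rewrite nk => lp.
have e : size p = k.+3 by rewrite sp nk.
rewrite (_ : \sum_(i < size p) p`_i * ('C(i, k.+2.-1))%:R = \sum_(i < k.+3) p`_i * ('C(i, k.+1))%:R); last first.
  by rewrite -[in RHS]e.
rewrite big_ord_recr /= big_ord_recr /= big1 ?add0r; last first.
  by move=> i _; rewrite bin_small ?mulr0 //=.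
rewrite binn mulr1 binSn lp -nk n1 mulr1 //.
Qed.

Lemma ct_rv p : good p -> (rv n p)`_1 = p`_n.-1.
Proof. by move=> _; rewrite coef_rv ifT ?subn1 //; lia. Qed.

Lemma tr_rv p : good p -> (rv n p)`_n.-1 = p`_1.
Proof. by move=> _; rewrite coef_rv ifT ?leq_pred //; congr (_`_ _); lia. Qed.

Lemma u_T p : good p -> u (T p) = p`_1.
Proof. by move=> _; rewrite TT. Qed.

Lemma u_E p : good p -> u p = \sum_(i < n.+1) p`_i * i%:R.
Proof.
case=> sp _; rewrite coef_T.
have e : size p = n.+1 := sp.
by rewrite -[in RHS]e; apply: eq_bigr => i _; rewrite bin1.
Qed.

Lemma u_rv p : good p -> u (rv n p) = 1 - u p.
Proof.
move=> gp; rewrite (u_E (good_rv gp)) (u_E gp).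
under eq_bigr do rewrite coef_rv -ltnS ltn_ord.
rewrite (reindex_inj rev_ord_inj) /=.
transitivity (\sum_(i < n.+1) p`_i - \sum_(i < n.+1) p`_i * i%:R); last first.
  by rewrite (good_sum gp).
rewrite -sumrB; apply: eq_bigr => i _.
have hi : (i <= n)%N by have := ltn_ord i.
rewrite subSS subKn // natrB // n1 mulrBr mulr1 //.
Qed.

Definition Pij (i j : 'F_2) (p : {poly 'F_2}) :=
  `[< irreducible_poly p >] && (p`_n.-1 == i) && (p`_1 == j).
Definition g (p : {poly 'F_2}) := if u p == 0 then T (rv n p) else rv n (T p).
Definition h (q : {poly 'F_2}) := if u q == 0 then rv n (T q) else T (rv n q).

Lemma gP (p : {poly 'F_2}) : size p = n.+1 -> Pij 0 0 p ->
  [/\ size (g p) = n.+1, Pij 1 1 (g p) & h (g p) = p].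
Proof.
move=> sp /andP [/andP [/asboolP irr /eqP t0] /eqP c0].
have gp : good p by [].
rewrite /g; case: (F2_cases (u p)) => w; rewrite w ?eqxx ?oner_eq0.
  have g1 := good_rv gp; have [s2 i2] := good_T g1.
  have e1 : (T (rv n p))`_n.-1 = 1 by rewrite (tr_T g1) (tr_rv gp) c0 add0r.
  have e2 : (T (rv n p))`_1 = 1 by rewrite (u_rv gp) w subr0.
  have e3 : (T (T (rv n p)))`_1 = 0 by rewrite TT (ct_rv gp) t0.
  split => //; first by rewrite /Pij e1 e2 !eqxx !andbT; apply/asboolP.
  by rewrite /h e3 eqxx TT (rvrv gp).
have g1 := good_T gp; have [s2 i2] := good_rv g1.
have e1 : (rv n (T p))`_n.-1 = 1 by rewrite (tr_rv g1) w.
have e2 : (rv n (T p))`_1 = 1 by rewrite (ct_rv g1) (tr_T gp) t0 add0r.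
have e3 : (T (rv n (T p)))`_1 = 1 by rewrite (u_rv g1) TT c0 subr0.
split => //; first by rewrite /Pij e1 e2 !eqxx !andbT; apply/asboolP.
by rewrite /h e3 oner_eq0 (rvrv g1) TT.
Qed.

Lemma hP (q : {poly 'F_2}) : size q = n.+1 -> Pij 1 1 q ->
  [/\ size (h q) = n.+1, Pij 0 0 (h q) & g (h q) = q].
Proof.
move=> sq /andP [/andP [/asboolP irr /eqP t1] /eqP c1].
have gq : good q by [].
rewrite /h; case: (F2_cases (u q)) => w; rewrite w ?eqxx ?oner_eq0.
  have g1 := good_T gq; have [s2 i2] := good_rv g1.
  have e1 : (rv n (T q))`_n.-1 = 0 by rewrite (tr_rv g1) w.
  have e2 : (rv n (T q))`_1 = 0 by rewrite (ct_rv g1) (tr_T gq) t1 F2_11.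
  have e3 : (T (rv n (T q)))`_1 = 0 by rewrite (u_rv g1) TT c1 subrr.
  split => //; first by rewrite /Pij e1 e2 !eqxx !andbT; apply/asboolP.
  by rewrite /g e3 eqxx (rvrv g1) TT.
have g1 := good_rv gq; have [s2 i2] := good_T g1.
have e1 : (T (rv n q))`_n.-1 = 0 by rewrite (tr_T g1) (tr_rv gq) c1 F2_11.
have e2 : (T (rv n q))`_1 = 0 by rewrite (u_rv gq) w subrr.
have e3 : (T (T (rv n q)))`_1 = 1 by rewrite TT (ct_rv gq) t1.
split => //; first by rewrite /Pij e1 e2 !eqxx !andbT; apply/asboolP.
by rewrite /g e3 oner_eq0 TT (rvrv gq).
Qed.

End Main.

Local Close Scope ring_scope.

Theorem theorem1 (n : nat) :
  odd n -> 3 <= n -> #|S n 0%R 0%R| = #|S n 1%R 1%R|.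
Proof.
move=> on n3; apply/anti_leq/andP; split.
  exact: (@transfer_le n (Pij n 0%R 0%R) (Pij n 1%R 1%R) (g n) (h n) (gP on n3)).
exact: (@transfer_le n (Pij n 1%R 1%R) (Pij n 0%R 0%R) (h n) (g n) (hP on n3)).
Qed.
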